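(* Let $\mathcal{L}$ be a set closed under a unary connective $\neg$, and let $\mathcal{C}: 2^{\mathcal{L}}\to 2^{\mathcal{L}}$ be a C-logics satisfying Weak Compactness, $\neg$-R1 and $\neg$-R2. If $A\subseteq\mathcal{L}$, $a\in\mathcal{L}$ and $a\notin\mathcal{C}(A)$, then there is a maximal consistent set $B\supseteq A$ such that $a\notin B$.
   Context: A C-logics is a map $\mathcal{C}: 2^{\mathcal{L}}\to 2^{\mathcal{L}}$ satisfying Inclusion ($A\subseteq\mathcal{C}(A)$) and Cumulativity ($A\subseteq B\subseteq\mathcal{C}(A)\Rightarrow\mathcal{C}(A)=\mathcal{C}(B)$). Weak Compactness: if $\mathcal{C}(A)=\mathcal{L}$ then $\mathcal{C}(B)=\mathcal{L}$ for some finite $B\subseteq A$. $\neg$-R1: $\mathcal{C}(A\cup\{a,\neg a\})=\mathcal{L}$. $\neg$-R2: if $\mathcal{C}(A\cup\{\neg a\})=\mathcal{L}$ then $a\in\mathcal{C}(A)$ (for all $A\subseteq\mathcal{L}$, $a\in\mathcal{L}$). $A$ is consistent iff $\mathcal{C}(A)\neq\mathcal{L}$; maximal consistent iff consistent and every strict superset in $\mathcal{L}$ is inconsistent. *)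

(* Defs.v *)
From Stdlib Require Import List.

Definition lset (L : Type) := L -> Prop.

Definition subset {L : Type} (A B : lset L) : Prop := forall x, A x -> B x.
Definition set_eq {L : Type} (A B : lset L) : Prop := forall x, A x <-> B x.
Definition full {L : Type} : lset L := fun _ => True.
Definition union {L : Type} (A B : lset L) : lset L := fun x => A x \/ B x.
Definition sing {L : Type} (a : L) : lset L := fun x => x = a.
Definition pair2 {L : Type} (a b : L) : lset L := fun x => x = a \/ x = b.

Definition finite_set {L : Type} (B : lset L) : Prop :=
  exists l : list L, forall x, B x <-> In x l.

Definition inclusion {L : Type} (C : lset L -> lset L) : Prop :=
  forall A, subset A (C A).
Definition cumulativity {L : Type} (C : lset L -> lset L) : Prop :=
  forall A B, subset A B -> subset B (C A) -> set_eq (C A) (C B).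
Definition C_logic {L : Type} (C : lset L -> lset L) : Prop :=
  inclusion C /\ cumulativity C.

Definition weak_compactness {L : Type} (C : lset L -> lset L) : Prop :=
  forall A, set_eq (C A) full ->
    exists B, finite_set B /\ subset B A /\ set_eq (C B) full.

Definition neg_R1 {L : Type} (neg : L -> L) (C : lset L -> lset L) : Prop :=
  forall A a, set_eq (C (union A (pair2 a (neg a)))) full.

Definition neg_R2 {L : Type} (neg : L -> L) (C : lset L -> lset L) : Prop :=
  forall A a, set_eq (C (union A (sing (neg a)))) full -> C A a.

Definition consistent {L : Type} (C : lset L -> lset L) (A : lset L) : Prop :=
  ~ set_eq (C A) full.

Definition maximal_consistent {L : Type} (C : lset L -> lset L) (A : lset L) : Prop :=
  consistent C A /\
  forall B, subset A B -> ~ subset B A -> ~ consistent C B.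

(* Main.v *)
Require Import Defs.
From Stdlib Require Import List Classical ClassicalEpsilon FunctionalExtensionality PropExtensionality.

Lemma lset_ext {L : Type} (X Y : lset L) : subset X Y -> subset Y X -> X = Y.
Proof.
  intros H1 H2. apply functional_extensionality. intro x.
  apply propositional_extensionality. split; auto.
Qed.

Definition UF {L : Type} (A0 : lset L) (F : lset L -> Prop) : lset L :=
  fun x => A0 x \/ exists X, F X /\ X x.

Inductive tower {L : Type} (A0 : lset L) (g : lset L -> lset L) : lset L -> Prop :=
| tw_base : tower A0 g A0
| tw_g : forall X, tower A0 g X -> tower A0 g (g X)
| tw_u : forall F, (forall X, F X -> tower A0 g X) -> tower A0 g (UF A0 F).

Lemma tower_A0 {L} (A0 : lset L) g (gext : forall X, subset X (g X)) :
  forall X, tower A0 g X -> subset A0 X.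
Proof.
  intros X TX; induction TX; intros x Hx.
  - auto.
  - apply gext; auto.
  - red; left; auto.
Qed.

Definition E_pt {L} (A0 : lset L) g (c : lset L) :=
  forall X, tower A0 g X -> subset X c -> ~ subset c X -> subset (g X) c.

Lemma lemma1 {L} (A0 : lset L) g (gext : forall X, subset X (g X)) c :
  tower A0 g c -> E_pt A0 g c ->
  forall X, tower A0 g X -> subset X c \/ subset (g c) X.
Proof.
  intros Tc Ec X TX. induction TX.
  - left. apply (tower_A0 A0 g gext); auto.
  - destruct IHTX as [H|H].
    + destruct (classic (subset c X)) as [H'|H'].
      * right. rewrite (lset_ext X c H H'). intros x; auto.
      * left. apply Ec; auto.
    + right. intros x Hx. apply gext; auto.
  - destruct (classic (exists Y, F Y /\ subset (g c) Y)) as [[Y [FY HY]]|Hn].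
    + right. intros x Hx. red; right. exists Y; auto.
    + left. intros x [Hx|[Y [FY HY]]].
      * eapply (tower_A0 A0 g gext); eauto.
      * destruct (H0 Y FY) as [H1|H1]; auto. exfalso; eauto.
Qed.

Lemma lemma2 {L} (A0 : lset L) g (gext : forall X, subset X (g X)) :
  forall c, tower A0 g c -> E_pt A0 g c.
Proof.
  intros c Tc; induction Tc as [|c0 Tc0 IH|F HF IHF]; intros X TX H1 H2.
  - exfalso. apply H2. apply (tower_A0 A0 g gext); auto.
  - destruct (lemma1 A0 g gext c0 Tc0 IH X TX) as [H3|H3].
    + destruct (classic (subset c0 X)) as [H4|H4].
      * rewrite (lset_ext X c0 H3 H4). intros x; auto.
      * intros x Hx. apply gext. apply (IH X TX H3 H4); auto.
    + exfalso. apply H2. intros x Hx. apply H3; auto.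
  - destruct (classic (exists Y, F Y /\ subset X Y /\ ~ subset (g Y) X)) as [[Y [FY [HY1 HY2]]]|Hn].
    + destruct (classic (subset Y X)) as [H4|H4].
      * assert (EX : X = Y) by (apply lset_ext; auto). subst Y.
        destruct (lemma1 A0 g gext X TX (IHF X FY) (UF A0 F) (tw_u A0 g F HF)) as [H5|H5].
        -- exfalso; auto.
        -- exact H5.
      * intros x Hx. red; right. exists Y. split; auto. apply (IHF Y FY X TX HY1 H4); auto.
    + exfalso. apply H2. intros x [Hx|[Y [FY HY]]].
      * eapply (tower_A0 A0 g gext); eauto.
      * assert (HgY : subset (g Y) X).
        { destruct (lemma1 A0 g gext Y (HF Y FY) (IHF Y FY) X TX) as [H5|H5]; auto.
          apply NNPP. intro H6. apply Hn. exists Y. auto. }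
        apply HgY. apply gext. auto.
Qed.

Lemma tower_chain {L} (A0 : lset L) g (gext : forall X, subset X (g X)) X Y :
  tower A0 g X -> tower A0 g Y -> subset X Y \/ subset Y X.
Proof.
  intros TX TY. destruct (lemma1 A0 g gext Y TY (lemma2 A0 g gext Y TY) X TX) as [H|H]; auto.
  right. intros x Hx. apply H, gext, Hx.
Qed.

Definition gC {L} (C : lset L -> lset L) (X : lset L) : lset L :=
  match excluded_middle_informative
          (exists Y, subset X Y /\ ~ subset Y X /\ consistent C Y) with
  | left H => proj1_sig (constructive_indefinite_description _ H)
  | right _ => X
  end.

Lemma gC_ext {L} (C : lset L -> lset L) X : subset X (gC C X).
Proof.
  unfold gC. destruct excluded_middle_informative as [H|H].
  - destruct constructive_indefinite_description as [Y HY]; simpl. apply HY.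
  - intros x; auto.
Qed.

Lemma gC_spec {L} (C : lset L -> lset L) X :
  (exists Y, subset X Y /\ ~ subset Y X /\ consistent C Y) ->
  subset X (gC C X) /\ ~ subset (gC C X) X /\ consistent C (gC C X).
Proof.
  intro H0. unfold gC. destruct excluded_middle_informative as [H|H].
  - destruct constructive_indefinite_description as [Y HY]; simpl. apply HY.
  - contradiction.
Qed.

Lemma gC_cons {L} (C : lset L -> lset L) X : consistent C X -> consistent C (gC C X).
Proof.
  intro HX. destruct (classic (exists Y, subset X Y /\ ~ subset Y X /\ consistent C Y)) as [H|H].
  - apply gC_spec; auto.
  - unfold gC. destruct excluded_middle_informative; [contradiction|auto].
Qed.

Lemma incons_mono {L} (C : lset L -> lset L) : C_logic C ->
  forall X Y, subset X Y -> set_eq (C X) full -> set_eq (C Y) full.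
Proof.
  intros [Hi Hc] X Y HXY HX z. split; [intros; exact I|intros _].
  assert (Hs : subset Y (C X)) by (intros y _; apply HX; exact I).
  apply (Hc X Y HXY Hs z). apply HX. exact I.
Qed.

Lemma finite_in_chain {L} (A0 : lset L) (F : lset L -> Prop) :
  (forall X Y, F X -> F Y -> subset X Y \/ subset Y X) ->
  (forall X, F X -> subset A0 X) ->
  forall l : list L, (forall x, In x l -> UF A0 F x) ->
  exists Z, (Z = A0 \/ F Z) /\ forall x, In x l -> Z x.
Proof.
  intros Hch HA0. induction l as [|a l IH]; intros Hl.
  - exists A0. split; auto. intros x [].
  - destruct IH as [Z [HZ HZl]]. { intros x Hx. apply Hl. right; auto. }
    destruct (Hl a (or_introl eq_refl)) as [Ha|[Y [FY HY]]].
    + exists Z. split; auto. intros x [<-|Hx]; auto.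
      destruct HZ as [->|HZ]; auto. apply HA0; auto.
    + destruct HZ as [->|HZ].
      * exists Y. split; auto. intros x [<-|Hx]; auto. apply HA0; auto.
      * destruct (Hch Z Y HZ FY) as [H|H].
        -- exists Y. split; auto. intros x [<-|Hx]; auto.
        -- exists Z. split; auto. intros x [<-|Hx]; auto.
Qed.

Lemma tower_cons {L} (C : lset L -> lset L) (A0 : lset L) :
  C_logic C -> weak_compactness C -> consistent C A0 ->
  forall X, tower A0 (gC C) X -> consistent C X.
Proof.
  intros HCl Hwc HA0 X TX. induction TX as [| X TX IH | F HF IHF].
  - auto.
  - apply gC_cons; auto.
  - intro Hinc. destruct (Hwc _ Hinc) as [B [[l Hl] [HBs HB]]].
    destruct (finite_in_chain A0 F) with (l := l) as [Z [HZ HZl]].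
    + intros. apply (tower_chain A0 (gC C) (gC_ext C)); auto.
    + intros. apply (tower_A0 A0 (gC C) (gC_ext C)); auto.
    + intros x Hx. apply HBs, Hl, Hx.
    + assert (Hc : consistent C Z) by (destruct HZ as [->|HZ]; auto).
      apply Hc. apply (incons_mono C HCl B Z); auto.
      intros x Hx. apply HZl, Hl, Hx.
Qed.

Theorem lemma14 (L : Type) (neg : L -> L) (C : lset L -> lset L) :
  C_logic C -> weak_compactness C -> neg_R1 neg C -> neg_R2 neg C ->
  forall (A : lset L) (a : L), ~ C A a ->
    exists B : lset L, subset A B /\ maximal_consistent C B /\ ~ B a.
Proof.
  intros HCl Hwc HR1 HR2 A a Ha.
  set (A0 := union A (sing (neg a))).
  assert (HA0 : consistent C A0) by (intro H; apply Ha, HR2, H).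
  set (T := tower A0 (gC C)).
  set (U := UF A0 T).
  assert (TU : T U) by (apply tw_u; auto).
  assert (HUc : consistent C U) by (apply (tower_cons C A0); auto).
  assert (HgU : subset (gC C U) U).
  { intros x Hx. red; right. exists (gC C U). split; auto. apply tw_g; auto. }
  assert (HA0U : subset A0 U) by (intros x Hx; left; auto).
  exists U. split; [|split; [split|]].
  - intros x Hx. apply HA0U. left; auto.
  - auto.
  - intros Y HUY HYU HYc.
    destruct (gC_spec C U) as [_ [H _]].
    + exists Y; auto.
    + contradiction.
  - intro HUa. apply HUc.
    assert (E : union U (pair2 a (neg a)) = U).
    { apply lset_ext.
      - intros x [Hx|[->| ->]]; auto. apply HA0U. right. reflexivity.
      - intros x Hx; left; auto. }
    rewrite <- E. apply HR1.
Qed.
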